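(* Let $\pi\in S_n$ be a cycle of length $l\ge2$ (with the remaining $n-l$ points fixed). Then $$\det(S_\pi)=\begin{cases}-1,& l=2,\\ 2,& l \text{ odd},\\ -4,& l=4k+2\text{ for some integer }k\ge1,\\ 0,& l=4k\text{ for some integer }k\ge1.\end{cases}$$
   Context: For $\theta\in S_n$, $S_\theta$ is the $n\times n$ symmetric $0/1$ matrix with $(S_\theta)_{ij}=1$ if $\theta(i)=j$ or $\theta^{-1}(i)=j$, and $0$ otherwise. *)

(* Defs.v *)
From HB Require Import structures.
From mathcomp Require Import all_boot all_order all_algebra all_fingroup.
Set Implicit Arguments. Unset Strict Implicit. Unset Printing Implicit Defensive.
Import GRing.Theory Num.Theory.

Definition S_mat (n : nat) (theta : 'S_n) : 'M[int]_n :=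
  \matrix_(i, j) Posz (((theta i == j) || ((theta^-1)%g i == j)) : nat).

Definition is_cycle_of_length (n : nat) (pi : 'S_n) (l : nat) : Prop :=
  exists x : 'I_n, #|porbit pi x| = l /\
    (forall y : 'I_n, y \notin porbit pi x -> pi y = y).

(* Main.v *)
Require Import Defs.
From HB Require Import structures.
From mathcomp Require Import all_boot all_order all_algebra all_fingroup.
From mathcomp Require Import all_field zify ring.
Import GRing.Theory Num.Theory.
Local Open Scope ring_scope.
Set Implicit Arguments. Unset Strict Implicit.

Lemma char_poly_cast (R : comNzRingType) m k (e : m = k) (A : 'M[R]_m) :
  char_poly (castmx (e, e) A) = char_poly A.
Proof. by case: k / e; rewrite castmx_id. Qed.

Lemma det_cast (R : comNzRingType) m k (e : m = k) (A : 'M[R]_m) :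
  \det (castmx (e, e) A) = \det A.
Proof. by case: k / e; rewrite castmx_id. Qed.

Definition sc l : 'S_l := perm (@ordS_inj l).

Lemma char_poly_cyc (R : comNzRingType) l (hl : (0 < l)%N) :
  char_poly (perm_mx (sc l) : 'M[R]_l) = 'X^l - 1.
Proof.
have sz : size ('X^l - 1 : {poly R}) = l.+1 by rewrite -polyC1 size_XnsubC.
have e : (size ('X^l - 1 : {poly R})).-1 = l by rewrite sz.
rewrite -[RHS](companionmxK (monicXnsubC 1 hl)) -(char_poly_cast e).
congr char_poly; apply/matrixP => i j.
rewrite castmxE !mxE /= permE /=.
rewrite sz /=.
have [il|il] := eqVneq (i : nat) l.-1.
  rewrite coefB coefXn coefC -val_eqE /= (ltn_eqF (ltn_ord j)).
  have -> : i.+1 = l by rewrite il prednK.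
  rewrite modnn eq_sym; case: (j == 0 :> nat); rewrite ?subr0 ?oppr0 //= sub0r opprK //.
have -> : (ordS i == j) = (i.+1 %% l == j)%N by [].
rewrite modn_small //.
have := ltn_ord i; move: il.
move=> /eqP; lia.
Qed.

Lemma horner_char (R : comNzRingType) n (A : 'M[R]_n) a :
  (char_poly A).[a] = \det (a%:M - A).
Proof.
rewrite -horner_evalE -det_map_mx; congr (\det _); apply/matrixP=> i j.
by rewrite !mxE rmorphB rmorphMn /= horner_evalE hornerX horner_evalE hornerC.
Qed.

Section Alg.
Variable l : nat.
Hypothesis hl : (0 < l)%N.
Let C : 'M[algC]_l := perm_mx (sc l).

Lemma detC : \det C = - (-1) ^+ l.
Proof.
have := char_poly_det C; rewrite char_poly_cyc // coefB coefXn coefC /=.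
rewrite eq_sym (gtn_eqF hl) sub0r => h.
have ss : (-1) ^+ l * (-1) ^+ l = 1 :> algC by rewrite -exprMn mulrNN mulr1 expr1n.
have -> : \det C = (-1) ^+ l * ((-1) ^+ l * \det C) by rewrite mulrA ss mul1r.
by rewrite -h mulrN1.
Qed.

Lemma detCb b : \det (C + b%:M) = (-1) ^+ l * ((- b) ^+ l - 1).
Proof.
have -> : C + b%:M = - ((- b)%:M - C).
  by rewrite opprB raddfN /= opprK.
rewrite -scaleN1r detZ -horner_char char_poly_cyc // !hornerE.
by [].
Qed.

Lemma CCt : C *m C^T = 1%:M.
Proof. by rewrite /C tr_perm_mx -perm_mxM mulgV perm_mx1. Qed.

Lemma detCCt : \det C * \det (C + C^T) =
  ((- 'i) ^+ l - 1) * ('i ^+ l - 1).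
Proof.
rewrite -det_mulmx mulmxDr CCt.
have -> : C *m C + 1%:M = (C + 'i%:M) *m (C + (- 'i)%:M).
  rewrite mulmxDr !mulmxDl -!scalar_mxM !mul_mx_scalar !mul_scalar_mx.
  rewrite mulrN -expr2 sqrCi opprK scaleNr addrA addrK.
  done.
rewrite det_mulmx !detCb opprK mulrACA -exprMn mulrNN mulr1 expr1n mul1r.
done.
Qed.
End Alg.

Definition Ci l : 'M[int]_l := perm_mx (sc l).

Lemma detCi_map l :
  (\det (Ci l + (Ci l)^T))%:~R = \det (perm_mx (sc l) + (perm_mx (sc l))^T : 'M[algC]_l).
Proof.
rewrite -det_map_mx /=; congr (\det _); apply/matrixP => i j; by rewrite !mxE rmorphD /= !rmorph_nat.
Qed.

Lemma keyD l (hl : (0 < l)%N) :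
  - (-1) ^+ l * \det (perm_mx (sc l) + (perm_mx (sc l))^T : 'M[algC]_l) =
  ((- 'i) ^+ l - 1) * ('i ^+ l - 1).
Proof. by rewrite -detC // detCCt. Qed.

Lemma i4 : ('i : algC) ^+ 4 = 1.
Proof. by rewrite (exprM _ 2 2) sqrCi expr2 mulrNN mulr1. Qed.

Lemma detCi_odd l : odd l -> \det (Ci l + (Ci l)^T) = 2.
Proof.
move=> ol; have hl : (0 < l)%N by case: l ol.
apply: (@intr_inj algC); rewrite detCi_map.
have := keyD hl; rewrite -signr_odd ol /= expr1 opprK mul1r => ->.
rewrite exprNn -signr_odd ol expr1 mulN1r.
have hu : ('i : algC) ^+ l * 'i ^+ l = -1.
  by rewrite -exprD addnn -mul2n exprM sqrCi -signr_odd ol expr1.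
set u := 'i ^+ l in hu *.
have -> : (- u - 1) * (u - 1) = 1 - u * u by ring.
by rewrite hu opprK.
Qed.

Lemma detCi_4k2 l k : l = (4 * k + 2)%N -> \det (Ci l + (Ci l)^T) = -4.
Proof.
move=> el; have hl : (0 < l)%N by rewrite el addn2.
have ol : odd l = false by rewrite el addn2 /= oddM.
apply: (@intr_inj algC); rewrite detCi_map.
have := keyD hl; rewrite -signr_odd ol /= expr0 mulN1r exprNn -signr_odd ol expr0 mul1r.
have -> : ('i : algC) ^+ l = -1 by rewrite el exprD exprM i4 expr1n mul1r sqrCi.
move=> h; rewrite -[LHS]opprK h; ring.
Qed.

Lemma detCi_4k l k : (1 <= k)%N -> l = (4 * k)%N -> \det (Ci l + (Ci l)^T) = 0.
Proof.
move=> k1 el; have hl : (0 < l)%N by rewrite el muln_gt0.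
have ol : odd l = false by rewrite el oddM.
apply: (@intr_inj algC); rewrite detCi_map.
have := keyD hl; rewrite -signr_odd ol /= expr0 mulN1r exprNn -signr_odd ol expr0 mul1r.
have -> : ('i : algC) ^+ l = 1 by rewrite el exprM i4 expr1n.
rewrite subrr mulr0 => /eqP; rewrite oppr_eq0 => /eqP ->.
by rewrite rmorph0.
Qed.


Lemma iter_mod (T : Type) (f : T -> T) x l :
  iter l f x = x -> forall k, iter k f x = iter (k %% l) f x.
Proof.
move=> hl k.
have hq : forall q, iter (q * l) f x = x.
  by elim=> [|q IH] //=; rewrite mulSn iterD IH hl.
by rewrite {1}(divn_eq k l) addnC iterD hq.
Qed.

Lemma det_reindex n (A : 'M[int]_n) (s : 'S_n) :
  \det (\matrix_(i, j) A (s i) (s j)) = \det A.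
Proof.
have -> : \matrix_(i, j) A (s i) (s j) = row_perm s (col_perm s A).
  by apply/matrixP => i j; rewrite !mxE.
rewrite row_permE col_permE !det_mulmx !det_perm odd_permV mulrCA mulrA.
by rewrite -mulrA -signr_addb addbb mulr1.
Qed.


Section Reindex.
Variables (n l : nat) (pi : 'S_n) (x : 'I_n).
Hypothesis hx : #|porbit pi x| = l.
Hypothesis hfix : forall y : 'I_n, y \notin porbit pi x -> pi y = y.

Let O := porbit pi x.
Let m := #|~: O|.

Lemma l_pos : (0 < l)%N.
Proof. by rewrite -hx lt0n card_porbit_neq0. Qed.

Lemma iter_l : iter l pi x = x.
Proof. by rewrite -hx iter_porbit. Qed.

Lemma iter_in k : iter k pi x \in O.
Proof. by rewrite -permX mem_porbit. Qed.

Lemma iter_eq a b : (iter a pi x == iter b pi x) = (a %% l == b %% l)%N.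
Proof.
rewrite (iter_mod iter_l a) (iter_mod iter_l b).
have lp := l_pos.
rewrite -(nth_traject pi (ltn_pmod a lp)) -(nth_traject pi (ltn_pmod b lp)).
by rewrite nth_uniq ?size_traject ?ltn_pmod // -hx uniq_traject_porbit.
Qed.

Definition hh (k : 'I_(l + m)) : 'I_n :=
  match split k with inl a => iter a pi x | inr b => enum_val b end.

Lemma hh_inj : injective hh.
Proof.
move=> i j; rewrite -[i]splitK -[j]splitK /hh !unsplitK.
case: (split i) => [a|b]; case: (split j) => [a'|b'] /= h.
- congr (unsplit (inl _)); apply/val_inj/eqP.
  by move: h => /eqP; rewrite iter_eq !modn_small.
- by move: (enum_valP b'); rewrite -h inE iter_in.
- by move: (enum_valP b); rewrite h inE iter_in.
- by rewrite (enum_val_inj h).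
Qed.

Lemma lm_n : (l + m)%N = n.
Proof. by rewrite /m -hx cardsC card_ord. Qed.

Definition hs : 'S_n := perm (inj_comp hh_inj (@cast_ord_inj _ _ (esym lm_n))).

Lemma det_B : \det (\matrix_(i, j) (S_mat pi) (hh i) (hh j)) = \det (S_mat pi).
Proof.
rewrite -(det_reindex (S_mat pi) hs) -(det_cast (esym lm_n)); congr (\det _).
apply/matrixP => i j; rewrite castmxE !mxE /hs !permE /= !cast_ord_comp !cast_ord_id.
done.
Qed.

Lemma hh_l a : hh (lshift m a) = iter a pi x.
Proof. by rewrite /hh (unsplitK (inl a : 'I_l + 'I_m)). Qed.
Lemma hh_r b : hh (rshift l b) = enum_val b.
Proof. by rewrite /hh (unsplitK (inr b : 'I_l + 'I_m)). Qed.

Lemma ev_fix (b : 'I_m) : pi (enum_val b) = enum_val b.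
Proof. by apply: hfix; have := enum_valP b; rewrite inE. Qed.

Lemma ev_out (b : 'I_m) k : (iter k pi x == enum_val b) = false.
Proof.
by apply/negbTE; apply: contraT; rewrite negbK => /eqP h; have := enum_valP b; rewrite inE -h iter_in.
Qed.

Lemma iterSpi k : pi (iter k pi x) = iter k.+1 pi x.
Proof. by []. Qed.

Definition Aorb : 'M[int]_l := \matrix_(a, b) (S_mat pi) (iter a pi x) (iter b pi x).

Lemma B_block : \matrix_(i, j) (S_mat pi) (hh i) (hh j) = block_mx Aorb 0 0 1%:M.
Proof.
apply/matrixP => i j; rewrite -[i]splitK -[j]splitK.
case: (split i) => [a|b]; case: (split j) => [a'|b'] /=;
  rewrite ?block_mxEul ?block_mxEur ?block_mxEdl ?block_mxEdr !mxE ?hh_l ?hh_r //; rewrite (canF_eq (permKV pi)).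
- by rewrite iterSpi ev_fix !ev_out.
- by rewrite ev_fix iterSpi eq_sym ev_out eq_sym ev_out.
- by rewrite !ev_fix (inj_eq enum_val_inj) orbb natz.
Qed.

Lemma modS_cases k a : (a < k)%N -> (a.+1 %% k = if a.+1 == k then 0 else a.+1)%N.
Proof.
move=> ak; case: eqP => [->|ne]; first by rewrite modnn.
by rewrite modn_small //; rewrite ltn_neqAle ak andbT; apply/eqP.
Qed.


Lemma Aorb_E (a b : 'I_l) : Aorb a b = Posz (((ordS a == b) || (ordS b == a)) : nat).
Proof.
rewrite !mxE iterSpi (canF_eq (permKV pi)) iterSpi !iter_eq.
rewrite !(modn_small (ltn_ord a)) !(modn_small (ltn_ord b)) [X in _ || X]eq_sym.
by [].
Qed.

Lemma Aorb2 : l = 2%N -> Aorb = Ci l.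
Proof.
move=> l2; apply/matrixP => a b; rewrite Aorb_E /Ci !mxE permE.
have -> : (ordS b == a) = (ordS a == b).
  apply/eqP/eqP => /(congr1 val) /= h; apply/val_inj => /=; move: h;
  have := ltn_ord a; have := ltn_ord b;
  move: (nat_of_ord a) (nat_of_ord b) => a' b'; rewrite l2; lia.
by rewrite orbb natz.
Qed.

Lemma Aorb3 : (3 <= l)%N -> Aorb = Ci l + (Ci l)^T.
Proof.
move=> l3; apply/matrixP => a b; rewrite Aorb_E /Ci !mxE !permE.
have : ~~ ((ordS a == b) && (ordS b == a)).
  apply/negP => /andP [/eqP /(congr1 val) /= h1 /eqP /(congr1 val) /= h2].
  move: h1 h2; rewrite !modS_cases //.
  have := ltn_ord a; have := ltn_ord b.
  by case: eqP; case: eqP; lia.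
by case: (ordS a == b); case: (ordS b == a).
Qed.
End Reindex.

Lemma detCi l : (0 < l)%N -> \det (Ci l) = - (-1) ^+ l.
Proof.
move=> hl; apply: (@intr_inj algC).
rewrite -det_map_mx /= map_perm_mx detC // rmorphN rmorphXn /= rmorphN rmorph1.
done.
Qed.


Theorem mainTheorem12 (n l : nat) (pi : 'S_n)
  (hl : (2 <= l)%N) (hcyc : is_cycle_of_length pi l) :
  (l = 2%N -> \det (S_mat pi) = -1) /\
  (odd l -> \det (S_mat pi) = 2) /\
  (forall k : nat, (1 <= k)%N -> l = (4 * k + 2)%N -> \det (S_mat pi) = -4) /\
  (forall k : nat, (1 <= k)%N -> l = (4 * k)%N -> \det (S_mat pi) = 0).
Proof.
case: hcyc => x [hx hfix].
have hS : \det (S_mat pi) = \det (Aorb l pi x).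
  by rewrite -(det_B hx) (B_block l hfix) det_ublock det1 mulr1.
rewrite hS; split; [|split; [|split]].
- move=> l2; rewrite (Aorb2 hx l2) detCi; last by rewrite l2.
  by rewrite l2 expr2 mulrNN mulr1.
- move=> ol; have l3 : (3 <= l)%N.
    have : l != 2%N by apply: contraTneq ol => ->.
    by move=> /eqP; lia.
  by rewrite (Aorb3 hx l3) detCi_odd.
- move=> k k1 el; have l3 : (3 <= l)%N by rewrite el; lia.
  by rewrite (Aorb3 hx l3) (detCi_4k2 el).
- move=> k k1 el; have l3 : (3 <= l)%N by rewrite el; lia.
  by rewrite (Aorb3 hx l3) (detCi_4k k1 el).
Qed.
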